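(* Let $A > 0$ and let $a, b, a', b'$ be complex numbers such that $2|a| e^{|b|+1} \le A$, $|b - b'| < \epsilon$, $|a - a'| < \epsilon |a|$, and $\epsilon < \min(1/e, 1/A)$. Then $$\| Y(b) X(a) Y(-b) - Y(b') X(a') Y(-b') \| \le 12\, e^{A + |b|} |a|\, \epsilon.$$
   Context: For $U \in \mathfrak{sl}_2(\mathbb{C})$ and $t\in\mathbb{C}$, $U(t) = \exp(tU)$. $X = \begin{pmatrix} 1/2 & 0 \\ 0 & -1/2 \end{pmatrix}$, $\theta = \begin{pmatrix} 0 & -1/2 \\ 1/2 & 0\end{pmatrix}$, $Y = \exp(\tfrac{\pi}{2}\theta) X \exp(-\tfrac{\pi}{2}\theta)$. $\|\cdot\|$ is the operator norm on $M_2(\mathbb{C})$ with respect to the standard Hermitian norm. *)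

(* Defs.v *)
From Stdlib Require Import Reals.
From Coquelicot Require Import Coquelicot.
Open Scope R_scope.

Notation CC := Complex.C.

Record M2 := mkM2 { m11 : CC; m12 : CC; m21 : CC; m22 : CC }.

Definition M2add (P Q : M2) : M2 :=
  mkM2 (Cplus (m11 P) (m11 Q)) (Cplus (m12 P) (m12 Q))
       (Cplus (m21 P) (m21 Q)) (Cplus (m22 P) (m22 Q)).
Definition M2scale (c : CC) (P : M2) : M2 :=
  mkM2 (Cmult c (m11 P)) (Cmult c (m12 P)) (Cmult c (m21 P)) (Cmult c (m22 P)).
Definition M2sub (P Q : M2) : M2 := M2add P (M2scale (RtoC (-1)) Q).
Definition M2mul (P Q : M2) : M2 :=
  mkM2 (Cplus (Cmult (m11 P) (m11 Q)) (Cmult (m12 P) (m21 Q)))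
       (Cplus (Cmult (m11 P) (m12 Q)) (Cmult (m12 P) (m22 Q)))
       (Cplus (Cmult (m21 P) (m11 Q)) (Cmult (m22 P) (m21 Q)))
       (Cplus (Cmult (m21 P) (m12 Q)) (Cmult (m22 P) (m22 Q))).
Definition M2id : M2 := mkM2 (RtoC 1) (RtoC 0) (RtoC 0) (RtoC 1).
Definition M2zero : M2 := mkM2 (RtoC 0) (RtoC 0) (RtoC 0) (RtoC 0).

Fixpoint M2pow (P : M2) (n : nat) : M2 :=
  match n with O => M2id | S k => M2mul P (M2pow P k) end.

Fixpoint expPartial (P : M2) (N : nat) : M2 :=
  match N with
  | O => M2zero
  | S k => M2add (expPartial P k)
                 (M2scale (RtoC (/ INR (Factorial.fact k))) (M2pow P k))
  end.

Definition Clim (u : nat -> CC) : CC :=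
  (real (Lim_seq (fun N => Re (u N))), real (Lim_seq (fun N => Im (u N)))).

Definition M2exp (P : M2) : M2 :=
  mkM2 (Clim (fun N => m11 (expPartial P N))) (Clim (fun N => m12 (expPartial P N)))
       (Clim (fun N => m21 (expPartial P N))) (Clim (fun N => m22 (expPartial P N))).

Definition oneparam (U : M2) (t : CC) : M2 := M2exp (M2scale t U).

Definition Xm : M2 := mkM2 (RtoC (1/2)) (RtoC 0) (RtoC 0) (RtoC (-1/2)).
Definition thetam : M2 := mkM2 (RtoC 0) (RtoC (-1/2)) (RtoC (1/2)) (RtoC 0).
Definition Ym : M2 :=
  M2mul (M2mul (oneparam thetam (RtoC (PI/2))) Xm) (oneparam thetam (RtoC (- (PI/2)))).

Definition vnorm (v1 v2 : CC) : R := sqrt (Cmod v1 ^ 2 + Cmod v2 ^ 2).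
Definition opnorm (P : M2) : R :=
  real (Lub_Rbar (fun r => exists v1 v2 : CC, vnorm v1 v2 <= 1 /\
     r = vnorm (Cplus (Cmult (m11 P) v1) (Cmult (m12 P) v2))
               (Cplus (Cmult (m21 P) v1) (Cmult (m22 P) v2)))).

(* Main.v *)
Require Import Defs.
From Stdlib Require Import Reals Lra Lia.
From Coquelicot Require Import Coquelicot.
Open Scope R_scope.


Definition Ccv (u : nat -> CC) (l : CC) : Prop :=
  is_lim_seq (fun N => Re (u N)) (Re l) /\ is_lim_seq (fun N => Im (u N)) (Im l).

Lemma Ccv_ext u v l : (forall N, u N = v N) -> Ccv u l -> Ccv v l.
Proof.
  intros H [H1 H2]; split; (eapply is_lim_seq_ext; [|eassumption]); intro N; simpl; now rewrite H.
Qed.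

Lemma Ccv_const c : Ccv (fun _ => c) c.
Proof. split; apply is_lim_seq_const. Qed.

Lemma Ccv_plus u v l m : Ccv u l -> Ccv v m -> Ccv (fun N => Cplus (u N) (v N)) (Cplus l m).
Proof.
  intros [H1 H2] [H3 H4]; split.
  - exact (is_lim_seq_plus' _ _ _ _ H1 H3).
  - exact (is_lim_seq_plus' _ _ _ _ H2 H4).
Qed.

Lemma Ccv_mulc c u l : Ccv u l -> Ccv (fun N => Cmult c (u N)) (Cmult c l).
Proof.
  intros [H1 H2]; split.
  - apply (is_lim_seq_minus' (fun N => fst c * fst (u N)) (fun N => snd c * snd (u N))).
    + apply is_lim_seq_mult'; [apply is_lim_seq_const|exact H1].
    + apply is_lim_seq_mult'; [apply is_lim_seq_const|exact H2].
  - apply (is_lim_seq_plus' (fun N => fst c * snd (u N)) (fun N => snd c * fst (u N))).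
    + apply is_lim_seq_mult'; [apply is_lim_seq_const|exact H2].
    + apply is_lim_seq_mult'; [apply is_lim_seq_const|exact H1].
Qed.

Lemma Ccv_minus u v l m : Ccv u l -> Ccv v m -> Ccv (fun N => Cminus (u N) (v N)) (Cminus l m).
Proof.
  intros H1 H2.
  apply (Ccv_ext (fun N => Cplus (u N) (Cmult (RtoC (-1)) (v N)))).
  { intro N; unfold Cminus; ring. }
  replace (Cminus l m) with (Cplus l (Cmult (RtoC (-1)) m)) by (unfold Cminus; ring).
  apply Ccv_plus; auto. apply Ccv_mulc; auto.
Qed.

Lemma Ccv_shift u l : Ccv (fun N => u (S N)) l -> Ccv u l.
Proof.
  intros [H1 H2]; split; apply is_lim_seq_incr_1; assumption.
Qed.

Lemma Ccv_shift_r u l : Ccv u l -> Ccv (fun N => u (S N)) l.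
Proof. intros [H1 H2]; split; apply is_lim_seq_incr_1 in H1, H2; assumption. Qed.

Lemma Ccv_Cmod u l : Ccv u l -> is_lim_seq (fun N => Cmod (u N)) (Cmod l).
Proof.
  intros [H1 H2]. unfold Cmod.
  apply (is_lim_seq_continuous sqrt (fun N => fst (u N) ^ 2 + snd (u N) ^ 2)).
  - apply continuity_pt_sqrt. nra.
  - apply is_lim_seq_plus'.
    + apply (is_lim_seq_ext (fun N => fst (u N) * fst (u N))). intros; simpl; ring.
      replace (fst l ^ 2) with (fst l * fst l) by (simpl; ring).
      apply is_lim_seq_mult'; assumption.
    + apply (is_lim_seq_ext (fun N => snd (u N) * snd (u N))). intros; simpl; ring.
      replace (snd l ^ 2) with (snd l * snd l) by (simpl; ring).
      apply is_lim_seq_mult'; assumption.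
Qed.

Lemma Clim_Ccv u l : Ccv u l -> Clim u = l.
Proof.
  intros [H1 H2]. unfold Clim.
  rewrite (is_lim_seq_unique _ _ H1), (is_lim_seq_unique _ _ H2). simpl.
  destruct l; reflexivity.
Qed.

Lemma Ccv_unique u l m : Ccv u l -> Ccv u m -> l = m.
Proof.
  intros [H1 H2] [H3 H4].
  apply is_lim_seq_unique in H1, H2, H3, H4.
  rewrite H1 in H3; rewrite H2 in H4. injection H3; injection H4; intros.
  destruct l, m; simpl in *; subst; reflexivity.
Qed.

Lemma Ccv_le2 u v l m M (Ml : R) :
  Ccv u l -> Ccv v m -> is_lim_seq M Ml ->
  (forall N, Cmod (u N) + Cmod (v N) <= M N) -> Cmod l + Cmod m <= Ml.
Proof.
  intros H1 H2 H3 H.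
  assert (H4 := is_lim_seq_plus' _ _ _ _ (Ccv_Cmod _ _ H1) (Ccv_Cmod _ _ H2)).
  exact (is_lim_seq_le _ _ _ _ H H4 H3).
Qed.


Lemma Cmod_Cpow z n : Cmod (Cpow z n) = Cmod z ^ n.
Proof. induction n; simpl. apply Cmod_1. rewrite Cmod_mult, IHn; reflexivity. Qed.

Lemma Rabs_Im_le c : Rabs (Im c) <= Cmod c.
Proof. eapply Rle_trans; [|apply Rmax_Cmod]. apply Rmax_r. Qed.

Fixpoint ExpN (N : nat) (r : R) : R :=
  match N with O => 0 | S k => ExpN k r + r ^ k / INR (Factorial.fact k) end.

Lemma ExpN_sum N r : ExpN (S N) r = sum_n (fun k => scal (pow_n r k) (/ INR (Factorial.fact k))) N.
Proof.
  induction N.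
  - rewrite sum_O. simpl. rewrite scal_one. unfold Rdiv. ring.
  - rewrite sum_Sn. rewrite <- IHN. rewrite pow_n_pow. unfold plus, scal; simpl. unfold mult; simpl. unfold Rdiv. ring.
Qed.

Lemma ExpN_lim r : is_lim_seq (fun N => ExpN N r) (exp r).
Proof.
  apply is_lim_seq_incr_1.
  apply (is_lim_seq_ext (sum_n (fun k => scal (pow_n r k) (/ INR (Factorial.fact k))))).
  { intro; rewrite ExpN_sum; reflexivity. }
  exact (is_exp_Reals r).
Qed.

Lemma ExpN_incr N r : 0 <= r -> ExpN N r <= ExpN (S N) r.
Proof.
  intro Hr. simpl. assert (0 <= r ^ N / INR (Factorial.fact N)).
  { apply Rmult_le_pos. apply pow_le; auto. left; apply Rinv_0_lt_compat, INR_fact_lt_0. }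
  lra.
Qed.

Lemma ExpN_le_exp N r : 0 <= r -> ExpN N r <= exp r.
Proof. intros Hr. apply (is_lim_seq_incr_compare (fun N => ExpN N r) (exp r)). apply ExpN_lim. intro; apply ExpN_incr; auto. Qed.

Lemma ExpN_ge0 N r : 0 <= r -> 0 <= ExpN N r.
Proof. intro Hr; induction N. simpl; lra. eapply Rle_trans; [apply IHN|apply ExpN_incr; auto]. Qed.

Lemma term_le_exp n r : 0 <= r -> r ^ n / INR (Factorial.fact n) <= exp r.
Proof.
  intros Hr. eapply Rle_trans; [|apply (ExpN_le_exp (S n) r Hr)]. simpl.
  assert (0 <= ExpN n r) by (apply ExpN_ge0; auto). lra.
Qed.

Lemma rad_gen (a : nat -> R) (K : R) : 0 <= K ->
  (forall n, Rabs (a n) <= K ^ n / INR (Factorial.fact n)) ->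
  forall t, Rbar_lt (Rabs t) (CV_radius a).
Proof.
  intros HK Ha t.
  set (r := Rabs t + 1).
  assert (Hr : 0 <= r) by (unfold r; pose proof (Rabs_pos t); lra).
  assert (Hin : exists M, forall n, Rabs (a n * r ^ n) <= M).
  { exists (exp (K * r)). intro n.
    rewrite Rabs_mult, (Rabs_right (r ^ n)) by (apply Rle_ge, pow_le; auto).
    eapply Rle_trans; [|apply (term_le_exp n (K * r))].
    - rewrite Rpow_mult_distr. unfold Rdiv.
      replace (K ^ n * r ^ n * / INR (Factorial.fact n)) with (K ^ n * / INR (Factorial.fact n) * r ^ n) by ring.
      apply Rmult_le_compat_r. apply pow_le; auto. apply Ha.
    - apply Rmult_le_pos; auto. }
  destruct (CV_radius_bounded a) as [Hub _].
  specialize (Hub r Hin).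
  destruct (CV_radius a) as [x| |]; simpl in *; unfold r in Hub; lra.
Qed.

Definition ar (z : CC) (n : nat) : R := Re (Cpow z n) / INR (Factorial.fact n).
Definition ai (z : CC) (n : nat) : R := Im (Cpow z n) / INR (Factorial.fact n).
Definition Ef (z : CC) : CC := (PSeries (ar z) 1, PSeries (ai z) 1).

Lemma ar_bound z n : Rabs (ar z n) <= Cmod z ^ n / INR (Factorial.fact n).
Proof.
  unfold ar, Rdiv. rewrite Rabs_mult, (Rabs_right (/ _)).
  2: left; apply Rinv_0_lt_compat, INR_fact_lt_0.
  apply Rmult_le_compat_r. left; apply Rinv_0_lt_compat, INR_fact_lt_0.
  rewrite <- Cmod_Cpow. apply re_le_Cmod.
Qed.

Lemma ai_bound z n : Rabs (ai z n) <= Cmod z ^ n / INR (Factorial.fact n).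
Proof.
  unfold ai, Rdiv. rewrite Rabs_mult, (Rabs_right (/ _)).
  2: left; apply Rinv_0_lt_compat, INR_fact_lt_0.
  apply Rmult_le_compat_r. left; apply Rinv_0_lt_compat, INR_fact_lt_0.
  rewrite <- Cmod_Cpow. apply Rabs_Im_le.
Qed.

Lemma rad_ar z t : Rbar_lt (Rabs t) (CV_radius (ar z)).
Proof. apply (rad_gen _ (Cmod z)). apply Cmod_ge_0. apply ar_bound. Qed.
Lemma rad_ai z t : Rbar_lt (Rabs t) (CV_radius (ai z)).
Proof. apply (rad_gen _ (Cmod z)). apply Cmod_ge_0. apply ai_bound. Qed.

Lemma PSd_ar z n : PS_derive (ar z) n = Re z * ar z n - Im z * ai z n.
Proof.
  unfold PS_derive, ar, ai. rewrite fact_simpl, mult_INR.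
  change (Cpow z (S n)) with (Cmult z (Cpow z n)).
  unfold Cmult, Re, Im; cbn [fst snd].
  pose proof (INR_fact_neq_0 n). assert (INR (S n) <> 0) by (apply not_0_INR; lia).
  set (F := INR (Factorial.fact n)) in *. set (G := INR (S n)) in *.
  field. auto.
Qed.

Lemma PSd_ai z n : PS_derive (ai z) n = Re z * ai z n + Im z * ar z n.
Proof.
  unfold PS_derive, ar, ai. rewrite fact_simpl, mult_INR.
  change (Cpow z (S n)) with (Cmult z (Cpow z n)).
  unfold Cmult, Re, Im; cbn [fst snd].
  pose proof (INR_fact_neq_0 n). assert (INR (S n) <> 0) by (apply not_0_INR; lia).
  set (F := INR (Factorial.fact n)) in *. set (G := INR (S n)) in *.
  field. auto.
Qed.

Lemma PS_lin (a b : nat -> R) (x y t : R) :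
  Rbar_lt (Rabs t) (CV_radius a) -> Rbar_lt (Rabs t) (CV_radius b) ->
  PSeries (fun n => x * a n + y * b n) t = x * PSeries a t + y * PSeries b t.
Proof.
  intros Ha Hb.
  rewrite (PSeries_ext _ (PS_plus (PS_scal x a) (PS_scal y b))).
  2: intro n; reflexivity.
  rewrite PSeries_plus, !PSeries_scal. reflexivity.
  apply ex_pseries_scal. intros; apply Rmult_comm. apply CV_radius_inside; auto.
  apply ex_pseries_scal. intros; apply Rmult_comm. apply CV_radius_inside; auto.
Qed.

Lemma der_ar z t : is_derive (PSeries (ar z)) t (Re z * PSeries (ar z) t - Im z * PSeries (ai z) t).
Proof.
  assert (H := is_derive_PSeries (ar z) t (rad_ar z t)).
  rewrite (PSeries_ext _ (fun n => Re z * ar z n + (- Im z) * ai z n)) in H.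
  2: intro; rewrite PSd_ar; ring.
  rewrite PS_lin in H by (apply rad_ar || apply rad_ai).
  replace (Re z * PSeries (ar z) t - Im z * PSeries (ai z) t) with
    (Re z * PSeries (ar z) t + - Im z * PSeries (ai z) t) by ring. exact H.
Qed.

Lemma der_ai z t : is_derive (PSeries (ai z)) t (Re z * PSeries (ai z) t + Im z * PSeries (ar z) t).
Proof.
  assert (H := is_derive_PSeries (ai z) t (rad_ai z t)).
  rewrite (PSeries_ext _ (fun n => Re z * ai z n + Im z * ar z n)) in H.
  2: intro; rewrite PSd_ai; ring.
  rewrite PS_lin in H by (apply rad_ar || apply rad_ai). exact H.
Qed.


Lemma is_derive_eqv (f : R -> R) x l l' : is_derive f x l -> l = l' -> is_derive f x l'.
Proof. intros H <-; exact H. Qed.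

Lemma const_01 (f : R -> R) : (forall t, is_derive f t 0) -> f 1 = f 0.
Proof.
  intro H. destruct (MVT_cor4 f (fun _ => 0) 0 1 (fun c _ => H c) 1) as [c [Hc _]].
  rewrite Rminus_0_r, Rabs_R1; lra. lra.
Qed.

Lemma ar0 z : ar z 0 = 1.
Proof. unfold ar; simpl. lra. Qed.
Lemma ai0 z : ai z 0 = 0.
Proof. unfold ai; simpl. lra. Qed.

Lemma Ef_mul_opp z : Cmult (Ef z) (Ef (Copp z)) = RtoC 1.
Proof.
  set (w := Copp z).
  set (f1 := PSeries (ar z)). set (f2 := PSeries (ai z)).
  set (g1 := PSeries (ar w)). set (g2 := PSeries (ai w)).
  assert (Hw1 : Re w = - Re z) by (unfold w, Re; simpl; ring).
  assert (Hw2 : Im w = - Im z) by (unfold w, Im; simpl; ring).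
  assert (Hh : (fun t => f1 t * g1 t - f2 t * g2 t) 1 = (fun t => f1 t * g1 t - f2 t * g2 t) 0).
  { apply (const_01 (fun t => f1 t * g1 t - f2 t * g2 t)). intro t.
    assert (H := is_derive_minus _ _ t _ _
      (is_derive_mult _ _ t _ _ (der_ar z t) (der_ar w t) (fun n m => Rmult_comm n m))
      (is_derive_mult _ _ t _ _ (der_ai z t) (der_ai w t) (fun n m => Rmult_comm n m))).
    eapply is_derive_eqv. exact H.
    unfold minus, plus, mult, opp; simpl. unfold Re, Im. ring. }
  assert (Hk : (fun t => f1 t * g2 t + f2 t * g1 t) 1 = (fun t => f1 t * g2 t + f2 t * g1 t) 0).
  { apply (const_01 (fun t => f1 t * g2 t + f2 t * g1 t)). intro t.
    assert (H := is_derive_plus _ _ t _ _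
      (is_derive_mult _ _ t _ _ (der_ar z t) (der_ai w t) (fun n m => Rmult_comm n m))
      (is_derive_mult _ _ t _ _ (der_ai z t) (der_ar w t) (fun n m => Rmult_comm n m))).
    eapply is_derive_eqv. exact H.
    unfold minus, plus, mult, opp; simpl. unfold Re, Im. ring. }
  simpl in Hh, Hk. unfold f1, f2, g1, g2 in Hh, Hk. rewrite !PSeries_0, !ar0, !ai0 in Hh, Hk.
  unfold Ef, Cmult, RtoC; simpl. apply injective_projections; simpl; fold w; lra.
Qed.


Definition ctm (k : nat) (z : CC) : CC := Cmult (RtoC (/ INR (Factorial.fact k))) (Cpow z k).
Fixpoint cN (N : nat) (z : CC) : CC :=
  match N with O => RtoC 0 | S k => Cplus (cN k z) (if Nat.even k then ctm k z else RtoC 0) end.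
Fixpoint sN (N : nat) (z : CC) : CC :=
  match N with O => RtoC 0 | S k => Cplus (sN k z) (if Nat.even k then RtoC 0 else ctm k z) end.
Fixpoint EN (N : nat) (z : CC) : CC :=
  match N with O => RtoC 0 | S k => Cplus (EN k z) (ctm k z) end.

Lemma Cpow_opp z k : Cpow (Copp z) k = if Nat.even k then Cpow z k else Copp (Cpow z k).
Proof.
  induction k. reflexivity.
  change (Cpow (Copp z) (S k)) with (Cmult (Copp z) (Cpow (Copp z) k)).
  change (Cpow z (S k)) with (Cmult z (Cpow z k)).
  rewrite IHk, Nat.even_succ, <- Nat.negb_even. destruct (Nat.even k); simpl; ring.
Qed.

Lemma cN_opp N z : cN N (Copp z) = cN N z.
Proof.
  induction N. reflexivity. simpl. rewrite IHN. destruct (Nat.even N) eqn:E; [|reflexivity].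
  unfold ctm. rewrite Cpow_opp, E. reflexivity.
Qed.

Lemma sN_opp N z : sN N (Copp z) = Copp (sN N z).
Proof.
  induction N. simpl. apply injective_projections; simpl; ring.
  simpl. rewrite IHN. destruct (Nat.even N) eqn:E; [ring|].
  unfold ctm. rewrite Cpow_opp, E. ring.
Qed.

Lemma cs_EN N z : Cplus (cN N z) (sN N z) = EN N z.
Proof.
  induction N. simpl; ring. simpl. rewrite <- IHN. destruct (Nat.even N); ring.
Qed.

Lemma Re_ctm k z : Re (ctm k z) = ar z k.
Proof.
  unfold ctm, ar, Cmult, Re, RtoC; cbn [fst snd].
  pose proof (INR_fact_neq_0 k). field. auto.
Qed.
Lemma Im_ctm k z : Im (ctm k z) = ai z k.
Proof.
  unfold ctm, ai, Cmult, Im, RtoC; cbn [fst snd].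
  pose proof (INR_fact_neq_0 k). field. auto.
Qed.
Lemma scal1 k (x : R) : scal (pow_n 1 k) x = x.
Proof. rewrite pow_n_pow, pow1. unfold scal; simpl; unfold mult; simpl. ring. Qed.

Lemma EN_Re N z : Re (EN (S N) z) = sum_n (fun k => scal (pow_n 1 k) (ar z k)) N.
Proof.
  induction N.
  - rewrite sum_O, scal1. change (EN 1 z) with (Cplus (RtoC 0) (ctm 0 z)).
    rewrite <- Re_ctm. unfold Re, Cplus, RtoC; cbn [fst snd]. ring.
  - rewrite sum_Sn, <- IHN, scal1. change (EN (S (S N)) z) with (Cplus (EN (S N) z) (ctm (S N) z)).
    rewrite <- Re_ctm. reflexivity.
Qed.

Lemma EN_Im N z : Im (EN (S N) z) = sum_n (fun k => scal (pow_n 1 k) (ai z k)) N.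
Proof.
  induction N.
  - rewrite sum_O, scal1. change (EN 1 z) with (Cplus (RtoC 0) (ctm 0 z)).
    rewrite <- Im_ctm. unfold Im, Cplus, RtoC; cbn [fst snd]. ring.
  - rewrite sum_Sn, <- IHN, scal1. change (EN (S (S N)) z) with (Cplus (EN (S N) z) (ctm (S N) z)).
    rewrite <- Im_ctm. reflexivity.
Qed.

Lemma EN_Ccv z : Ccv (fun N => EN N z) (Ef z).
Proof.
  apply Ccv_shift. split.
  - eapply is_lim_seq_ext. intro N; symmetry; apply EN_Re.
    exact (PSeries_correct _ _ (CV_radius_inside _ _ (rad_ar z 1))).
  - eapply is_lim_seq_ext. intro N; symmetry; apply EN_Im.
    exact (PSeries_correct _ _ (CV_radius_inside _ _ (rad_ai z 1))).
Qed.

Definition Ch (z : CC) : CC := Cmult (RtoC (/2)) (Cplus (Ef z) (Ef (Copp z))).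
Definition Sh (z : CC) : CC := Cmult (RtoC (/2)) (Cminus (Ef z) (Ef (Copp z))).

Lemma cN_Ccv z : Ccv (fun N => cN N z) (Ch z).
Proof.
  apply (Ccv_ext (fun N => Cmult (RtoC (/2)) (Cplus (EN N z) (EN N (Copp z))))).
  { intro N. rewrite <- !cs_EN, cN_opp, sN_opp. apply injective_projections; simpl; field. }
  apply Ccv_mulc, Ccv_plus; apply EN_Ccv.
Qed.

Lemma sN_Ccv z : Ccv (fun N => sN N z) (Sh z).
Proof.
  apply (Ccv_ext (fun N => Cmult (RtoC (/2)) (Cminus (EN N z) (EN N (Copp z))))).
  { intro N. rewrite <- !cs_EN, cN_opp, sN_opp. apply injective_projections; simpl; field. }
  apply Ccv_mulc, Ccv_minus; apply EN_Ccv.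
Qed.

Lemma Cmod_ctm k z : Cmod (ctm k z) = Cmod z ^ k / INR (Factorial.fact k).
Proof.
  unfold ctm. rewrite Cmod_mult, Cmod_Cpow, Cmod_R, Rabs_right. unfold Rdiv; ring.
  left; apply Rinv_0_lt_compat, INR_fact_lt_0.
Qed.

Lemma pair_partial N z : Cmod (cN N z) + Cmod (sN N z) <= ExpN N (Cmod z).
Proof.
  induction N. simpl. rewrite Cmod_0. lra.
  simpl. pose proof (Cmod_triangle (cN N z) (if Nat.even N then ctm N z else RtoC 0)).
  pose proof (Cmod_triangle (sN N z) (if Nat.even N then RtoC 0 else ctm N z)).
  destruct (Nat.even N); rewrite Cmod_0, Cmod_ctm in *; lra.
Qed.

Lemma pow_lip z z' r n : Cmod z <= r -> Cmod z' <= r ->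
  Cmod (Cminus (Cpow z (S n)) (Cpow z' (S n))) <= INR (S n) * Cmod (Cminus z z') * r ^ n.
Proof.
  intros Hz Hz'. assert (Hr : 0 <= r) by (pose proof (Cmod_ge_0 z); lra).
  induction n.
  - simpl. replace (Cminus (Cmult z 1) (Cmult z' 1)) with (Cminus z z') by ring. lra.
  - replace (Cminus (Cpow z (S (S n))) (Cpow z' (S (S n)))) with
      (Cplus (Cmult z (Cminus (Cpow z (S n)) (Cpow z' (S n)))) (Cmult (Cminus z z') (Cpow z' (S n))))
      by (simpl; ring).
    eapply Rle_trans; [apply Cmod_triangle|]. rewrite !Cmod_mult, Cmod_Cpow.
    assert (Cmod z * Cmod (Cminus (Cpow z (S n)) (Cpow z' (S n))) <= r * (INR (S n) * Cmod (Cminus z z') * r ^ n)).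
    { apply Rmult_le_compat; auto; apply Cmod_ge_0. }
    assert (Cmod (Cminus z z') * Cmod z' ^ S n <= Cmod (Cminus z z') * r ^ S n).
    { apply Rmult_le_compat_l. apply Cmod_ge_0. apply pow_incr; split; auto; apply Cmod_ge_0. }
    rewrite !S_INR in *. simpl pow in *. nra.
Qed.

Lemma pair_lip_partial z z' r N : Cmod z <= r -> Cmod z' <= r ->
  Cmod (Cminus (cN (S N) z) (cN (S N) z')) + Cmod (Cminus (sN (S N) z) (sN (S N) z'))
  <= Cmod (Cminus z z') * ExpN N r.
Proof.
  intros Hz Hz'. induction N.
  - simpl. unfold ctm; simpl.
    replace (Cminus (Cplus 0 (Cmult (RtoC (/ 1)) 1)) (Cplus 0 (Cmult (RtoC (/ 1)) 1))) with (RtoC 0) by ring.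
    replace (Cminus (Cplus 0 0) (Cplus 0 0)) with (RtoC 0) by ring. rewrite Cmod_0. lra.
  - change (cN (S (S N)) z) with (Cplus (cN (S N) z) (if Nat.even (S N) then ctm (S N) z else RtoC 0)).
    change (cN (S (S N)) z') with (Cplus (cN (S N) z') (if Nat.even (S N) then ctm (S N) z' else RtoC 0)).
    change (sN (S (S N)) z) with (Cplus (sN (S N) z) (if Nat.even (S N) then RtoC 0 else ctm (S N) z)).
    change (sN (S (S N)) z') with (Cplus (sN (S N) z') (if Nat.even (S N) then RtoC 0 else ctm (S N) z')).
    assert (Ht : Cmod (Cminus (ctm (S N) z) (ctm (S N) z')) <= Cmod (Cminus z z') * (r ^ N / INR (Factorial.fact N))).
    { unfold ctm. replace (Cminus (Cmult (RtoC (/ INR (Factorial.fact (S N)))) (Cpow z (S N)))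
                               (Cmult (RtoC (/ INR (Factorial.fact (S N)))) (Cpow z' (S N))))
        with (Cmult (RtoC (/ INR (Factorial.fact (S N)))) (Cminus (Cpow z (S N)) (Cpow z' (S N)))) by ring.
      rewrite Cmod_mult, Cmod_R, Rabs_right by (left; apply Rinv_0_lt_compat, INR_fact_lt_0).
      eapply Rle_trans. apply Rmult_le_compat_l. left; apply Rinv_0_lt_compat, INR_fact_lt_0.
      apply (pow_lip z z' r N Hz Hz').
      rewrite fact_simpl, mult_INR. right. field. split. apply INR_fact_neq_0. apply not_0_INR; lia. }
    simpl ExpN.
    destruct (Nat.even (S N)).
    + replace (Cminus (Cplus (cN (S N) z) (ctm (S N) z)) (Cplus (cN (S N) z') (ctm (S N) z')))
        with (Cplus (Cminus (cN (S N) z) (cN (S N) z')) (Cminus (ctm (S N) z) (ctm (S N) z'))) by ring.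
      replace (Cminus (Cplus (sN (S N) z) 0) (Cplus (sN (S N) z') 0))
        with (Cminus (sN (S N) z) (sN (S N) z')) by ring.
      pose proof (Cmod_triangle (Cminus (cN (S N) z) (cN (S N) z')) (Cminus (ctm (S N) z) (ctm (S N) z'))).
      lra.
    + replace (Cminus (Cplus (sN (S N) z) (ctm (S N) z)) (Cplus (sN (S N) z') (ctm (S N) z')))
        with (Cplus (Cminus (sN (S N) z) (sN (S N) z')) (Cminus (ctm (S N) z) (ctm (S N) z'))) by ring.
      replace (Cminus (Cplus (cN (S N) z) 0) (Cplus (cN (S N) z') 0))
        with (Cminus (cN (S N) z) (cN (S N) z')) by ring.
      pose proof (Cmod_triangle (Cminus (sN (S N) z) (sN (S N) z')) (Cminus (ctm (S N) z) (ctm (S N) z'))).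
      lra.
Qed.

Lemma pair_bound z : Cmod (Ch z) + Cmod (Sh z) <= exp (Cmod z).
Proof.
  apply (Ccv_le2 _ _ _ _ _ _ (cN_Ccv z) (sN_Ccv z) (ExpN_lim (Cmod z))).
  intro N; apply pair_partial.
Qed.

Lemma pair_lip z z' r : Cmod z <= r -> Cmod z' <= r ->
  Cmod (Cminus (Ch z) (Ch z')) + Cmod (Cminus (Sh z) (Sh z')) <= Cmod (Cminus z z') * exp r.
Proof.
  intros Hz Hz'.
  apply (Ccv_le2 (fun N => Cminus (cN (S N) z) (cN (S N) z')) (fun N => Cminus (sN (S N) z) (sN (S N) z'))
           _ _ (fun N => Cmod (Cminus z z') * ExpN N r)).
  - apply Ccv_minus; apply (Ccv_shift_r (fun N => cN N _)); apply cN_Ccv.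
  - apply Ccv_minus; apply (Ccv_shift_r (fun N => sN N _)); apply sN_Ccv.
  - apply is_lim_seq_mult'. apply is_lim_seq_const. apply ExpN_lim.
  - intro; apply pair_lip_partial; auto.
Qed.


Lemma mul_scale a b P Q : M2mul (M2scale a P) (M2scale b Q) = M2scale (Cmult a b) (M2mul P Q).
Proof. destruct P, Q; unfold M2mul, M2scale; simpl; f_equal; ring. Qed.

Lemma mul_id_r Q : M2mul Q M2id = Q.
Proof. destruct Q; unfold M2mul, M2id; simpl; f_equal; ring. Qed.

Lemma M2pow_scale z Q k : M2mul Q Q = M2id ->
  M2pow (M2scale z Q) k = if Nat.even k then M2scale (Cpow z k) M2id else M2scale (Cpow z k) Q.
Proof.
  intro HQ. induction k. simpl. destruct Q; unfold M2scale, M2id; simpl; f_equal; ring.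
  change (M2pow (M2scale z Q) (S k)) with (M2mul (M2scale z Q) (M2pow (M2scale z Q) k)).
  rewrite IHk, Nat.even_succ, <- Nat.negb_even.
  destruct (Nat.even k); simpl; rewrite mul_scale.
  - rewrite mul_id_r; reflexivity.
  - rewrite HQ; reflexivity.
Qed.

Lemma expPartial_form z Q N : M2mul Q Q = M2id ->
  expPartial (M2scale z Q) N = M2add (M2scale (cN N z) M2id) (M2scale (sN N z) Q).
Proof.
  intro HQ. induction N.
  - simpl. destruct Q; unfold M2add, M2scale, M2zero, M2id; simpl; f_equal; ring.
  - change (expPartial (M2scale z Q) (S N)) with
      (M2add (expPartial (M2scale z Q) N) (M2scale (RtoC (/ INR (Factorial.fact N))) (M2pow (M2scale z Q) N))).
    rewrite IHN, M2pow_scale by exact HQ.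
    change (cN (S N) z) with (Cplus (cN N z) (if Nat.even N then ctm N z else RtoC 0)).
    change (sN (S N) z) with (Cplus (sN N z) (if Nat.even N then RtoC 0 else ctm N z)).
    unfold ctm. destruct (Nat.even N); destruct Q; unfold M2add, M2scale, M2id; simpl; f_equal; ring.
Qed.

Lemma Ccv_lin u v l m a b : Ccv u l -> Ccv v m ->
  Ccv (fun N => Cplus (Cmult (u N) a) (Cmult (v N) b)) (Cplus (Cmult l a) (Cmult m b)).
Proof.
  intros H1 H2.
  apply (Ccv_ext (fun N => Cplus (Cmult a (u N)) (Cmult b (v N)))). { intro; ring. }
  replace (Cplus (Cmult l a) (Cmult m b)) with (Cplus (Cmult a l) (Cmult b m)) by ring.
  apply Ccv_plus; apply Ccv_mulc; auto.
Qed.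

Lemma M2exp_form z Q : M2mul Q Q = M2id ->
  M2exp (M2scale z Q) = M2add (M2scale (Ch z) M2id) (M2scale (Sh z) Q).
Proof.
  intro HQ.
  assert (E : forall N, expPartial (M2scale z Q) N = M2add (M2scale (cN N z) M2id) (M2scale (sN N z) Q))
    by (intro; apply expPartial_form; exact HQ).
  unfold M2exp.
  rewrite (Clim_Ccv _ (Cplus (Cmult (Ch z) (RtoC 1)) (Cmult (Sh z) (m11 Q)))).
  2:{ apply (Ccv_ext (fun N => Cplus (Cmult (cN N z) (RtoC 1)) (Cmult (sN N z) (m11 Q)))).
      intro N; rewrite E; reflexivity. apply Ccv_lin; [apply cN_Ccv|apply sN_Ccv]. }
  rewrite (Clim_Ccv _ (Cplus (Cmult (Ch z) (RtoC 0)) (Cmult (Sh z) (m12 Q)))).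
  2:{ apply (Ccv_ext (fun N => Cplus (Cmult (cN N z) (RtoC 0)) (Cmult (sN N z) (m12 Q)))).
      intro N; rewrite E; reflexivity. apply Ccv_lin; [apply cN_Ccv|apply sN_Ccv]. }
  rewrite (Clim_Ccv _ (Cplus (Cmult (Ch z) (RtoC 0)) (Cmult (Sh z) (m21 Q)))).
  2:{ apply (Ccv_ext (fun N => Cplus (Cmult (cN N z) (RtoC 0)) (Cmult (sN N z) (m21 Q)))).
      intro N; rewrite E; reflexivity. apply Ccv_lin; [apply cN_Ccv|apply sN_Ccv]. }
  rewrite (Clim_Ccv _ (Cplus (Cmult (Ch z) (RtoC 1)) (Cmult (Sh z) (m22 Q)))).
  2:{ apply (Ccv_ext (fun N => Cplus (Cmult (cN N z) (RtoC 1)) (Cmult (sN N z) (m22 Q)))).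
      intro N; rewrite E; reflexivity. apply Ccv_lin; [apply cN_Ccv|apply sN_Ccv]. }
  reflexivity.
Qed.

Definition bnd (P : M2) (m : R) : Prop :=
  Cmod (m11 P) + Cmod (m12 P) <= m /\ Cmod (m21 P) + Cmod (m22 P) <= m /\
  Cmod (m11 P) + Cmod (m21 P) <= m /\ Cmod (m12 P) + Cmod (m22 P) <= m.

Lemma bnd_add P Q m n : bnd P m -> bnd Q n -> bnd (M2add P Q) (m + n).
Proof.
  destruct P as [p11 p12 p21 p22], Q as [q11 q12 q21 q22]; unfold bnd, M2add; simpl. intros [H1 [H2 [H3 H4]]] [G1 [G2 [G3 G4]]].
  pose proof (Cmod_triangle p11 q11). pose proof (Cmod_triangle p12 q12).
  pose proof (Cmod_triangle p21 q21). pose proof (Cmod_triangle p22 q22).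
  repeat split; lra.
Qed.

Lemma entry_le p q r s : Cmod (Cplus (Cmult p q) (Cmult r s)) <= Cmod p * Cmod q + Cmod r * Cmod s.
Proof. eapply Rle_trans; [apply Cmod_triangle|]. rewrite !Cmod_mult. lra. Qed.

Lemma bnd_mul P Q m n : bnd P m -> bnd Q n -> bnd (M2mul P Q) (m * n).
Proof.
  destruct P as [p11 p12 p21 p22], Q as [q11 q12 q21 q22]; unfold bnd, M2mul; simpl.
  intros [H1 [H2 [H3 H4]]] [G1 [G2 [G3 G4]]].
  pose proof (entry_le p11 q11 p12 q21). pose proof (entry_le p11 q12 p12 q22).
  pose proof (entry_le p21 q11 p22 q21). pose proof (entry_le p21 q12 p22 q22).
  set (a11 := Cmod p11) in *. set (a12 := Cmod p12) in *. set (a21 := Cmod p21) in *. set (a22 := Cmod p22) in *.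
  set (b11 := Cmod q11) in *. set (b12 := Cmod q12) in *. set (b21 := Cmod q21) in *. set (b22 := Cmod q22) in *.
  assert (0 <= a11) by apply Cmod_ge_0. assert (0 <= a12) by apply Cmod_ge_0.
  assert (0 <= a21) by apply Cmod_ge_0. assert (0 <= a22) by apply Cmod_ge_0.
  assert (0 <= b11) by apply Cmod_ge_0. assert (0 <= b12) by apply Cmod_ge_0.
  assert (0 <= b21) by apply Cmod_ge_0. assert (0 <= b22) by apply Cmod_ge_0.
  assert (0 <= m) by lra. assert (0 <= n) by lra.
  repeat split.
  - assert (a11 * (b11 + b12) <= a11 * n) by (apply Rmult_le_compat_l; lra).
    assert (a12 * (b21 + b22) <= a12 * n) by (apply Rmult_le_compat_l; lra).
    assert ((a11 + a12) * n <= m * n) by (apply Rmult_le_compat_r; lra). nra.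
  - assert (a21 * (b11 + b12) <= a21 * n) by (apply Rmult_le_compat_l; lra).
    assert (a22 * (b21 + b22) <= a22 * n) by (apply Rmult_le_compat_l; lra).
    assert ((a21 + a22) * n <= m * n) by (apply Rmult_le_compat_r; lra). nra.
  - assert ((a11 + a21) * b11 <= m * b11) by (apply Rmult_le_compat_r; lra).
    assert ((a12 + a22) * b21 <= m * b21) by (apply Rmult_le_compat_r; lra).
    assert (m * (b11 + b21) <= m * n) by (apply Rmult_le_compat_l; lra). nra.
  - assert ((a11 + a21) * b12 <= m * b12) by (apply Rmult_le_compat_r; lra).
    assert ((a12 + a22) * b22 <= m * b22) by (apply Rmult_le_compat_r; lra).
    assert (m * (b12 + b22) <= m * n) by (apply Rmult_le_compat_l; lra). nra.
Qed.

Lemma opnorm_aux a b c d x y W1 W2 m :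
  0 <= a -> 0 <= b -> 0 <= c -> 0 <= d -> 0 <= x -> 0 <= y -> 0 <= W1 -> 0 <= W2 ->
  a + b <= m -> c + d <= m -> a + c <= m -> b + d <= m -> x ^ 2 + y ^ 2 <= 1 ->
  W1 <= a * x + b * y -> W2 <= c * x + d * y -> W1 ^ 2 + W2 ^ 2 <= m ^ 2.
Proof.
  intros.
  assert (E1 : W1 ^ 2 <= (a * x + b * y) ^ 2) by (apply pow_incr; lra).
  assert (E2 : W2 ^ 2 <= (c * x + d * y) ^ 2) by (apply pow_incr; lra).
  assert (F1 : (a * x + b * y) ^ 2 <= (a + b) * (a * x ^ 2 + b * y ^ 2)).
  { assert (0 <= a * b * (x - y) ^ 2) by (apply Rmult_le_pos; [nra|apply pow2_ge_0]). nra. }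
  assert (F2 : (c * x + d * y) ^ 2 <= (c + d) * (c * x ^ 2 + d * y ^ 2)).
  { assert (0 <= c * d * (x - y) ^ 2) by (apply Rmult_le_pos; [nra|apply pow2_ge_0]). nra. }
  assert (0 <= x ^ 2) by apply pow2_ge_0. assert (0 <= y ^ 2) by apply pow2_ge_0.
  assert (G1 : (a + b) * (a * x ^ 2 + b * y ^ 2) <= m * (a * x ^ 2 + b * y ^ 2)) by (apply Rmult_le_compat_r; nra).
  assert (G2 : (c + d) * (c * x ^ 2 + d * y ^ 2) <= m * (c * x ^ 2 + d * y ^ 2)) by (apply Rmult_le_compat_r; nra).
  assert (G3 : m * ((a + c) * x ^ 2 + (b + d) * y ^ 2) <= m * (m * x ^ 2 + m * y ^ 2)).
  { apply Rmult_le_compat_l. lra. nra. }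
  assert (G4 : m * (m * x ^ 2 + m * y ^ 2) <= m * m) by (apply Rmult_le_compat_l; nra).
  nra.
Qed.

Lemma bnd_opnorm P m : bnd P m -> opnorm P <= m.
Proof.
  intro H. assert (Hm : 0 <= m).
  { destruct H as [H _]. pose proof (Cmod_ge_0 (m11 P)). pose proof (Cmod_ge_0 (m12 P)). lra. }
  unfold opnorm.
  set (E := fun r : R => exists v1 v2 : CC, vnorm v1 v2 <= 1 /\
     r = vnorm (Cplus (Cmult (m11 P) v1) (Cmult (m12 P) v2))
               (Cplus (Cmult (m21 P) v1) (Cmult (m22 P) v2))).
  assert (Hub : is_ub_Rbar E m).
  { intros r [v1 [v2 [Hv ->]]]. simpl. unfold vnorm in *.
    rewrite <- (sqrt_pow2 m Hm). apply sqrt_le_1_alt.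
    assert (Hv2 : Cmod v1 ^ 2 + Cmod v2 ^ 2 <= 1).
    { assert (0 <= Cmod v1 ^ 2 + Cmod v2 ^ 2) by (pose proof (pow2_ge_0 (Cmod v1)); pose proof (pow2_ge_0 (Cmod v2)); lra).
      rewrite <- (sqrt_sqrt (Cmod v1 ^ 2 + Cmod v2 ^ 2)) by auto.
      assert (0 <= sqrt (Cmod v1 ^ 2 + Cmod v2 ^ 2)) by apply sqrt_pos. nra. }
    destruct H as [H1 [H2 [H3 H4]]].
    apply (opnorm_aux (Cmod (m11 P)) (Cmod (m12 P)) (Cmod (m21 P)) (Cmod (m22 P)) (Cmod v1) (Cmod v2));
      try apply Cmod_ge_0; auto; apply entry_le. }
  destruct (Lub_Rbar_correct E) as [_ Hl].
  specialize (Hl m Hub).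
  destruct (Lub_Rbar E); simpl in *; lra.
Qed.


Lemma Copp_Copp (z : CC) : Copp (Copp z) = z.
Proof. apply injective_projections; simpl; ring. Qed.

Lemma Ch_opp z : Ch (Copp z) = Ch z.
Proof. unfold Ch. rewrite Copp_Copp. ring. Qed.
Lemma Sh_opp z : Sh (Copp z) = Copp (Sh z).
Proof. unfold Sh. rewrite Copp_Copp. ring. Qed.

Lemma ChSh z : Cminus (Cmult (Ch z) (Ch z)) (Cmult (Sh z) (Sh z)) = RtoC 1.
Proof.
  rewrite <- (Ef_mul_opp z). unfold Ch, Sh.
  apply injective_projections; unfold Cminus, Cplus, Cmult, Copp, RtoC; cbn [fst snd]; field.
Qed.

Lemma cN0 N : cN (S N) (RtoC 0) = RtoC 1.
Proof.
  induction N. simpl. unfold ctm. simpl. apply injective_projections; simpl; field.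
  change (cN (S (S N)) (RtoC 0)) with (Cplus (cN (S N) (RtoC 0)) (if Nat.even (S N) then ctm (S N) (RtoC 0) else RtoC 0)).
  rewrite IHN. destruct (Nat.even (S N)); [|ring]. unfold ctm.
  change (Cpow (RtoC 0) (S N)) with (Cmult (RtoC 0) (Cpow (RtoC 0) N)). ring.
Qed.
Lemma sN0 N : sN N (RtoC 0) = RtoC 0.
Proof.
  induction N. reflexivity. simpl. rewrite IHN. destruct (Nat.even N) eqn:E; [ring|]. unfold ctm.
  destruct N. discriminate E. change (Cpow (RtoC 0) (S N)) with (Cmult (RtoC 0) (Cpow (RtoC 0) N)). ring.
Qed.

Lemma Ch0 : Ch (RtoC 0) = RtoC 1.
Proof.
  apply (Ccv_unique (fun N => cN N (RtoC 0))). apply cN_Ccv.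
  apply Ccv_shift. apply (Ccv_ext (fun _ => RtoC 1)). intro; rewrite cN0; reflexivity. apply Ccv_const.
Qed.
Lemma Sh0 : Sh (RtoC 0) = RtoC 0.
Proof.
  apply (Ccv_unique (fun N => sN N (RtoC 0))). apply sN_Ccv.
  apply (Ccv_ext (fun _ => RtoC 0)). intro; rewrite sN0; reflexivity. apply Ccv_const.
Qed.

Definition Ysym (al be : R) : M2 := mkM2 (RtoC al) (RtoC be) (RtoC be) (RtoC (- al)).
Definition Yform (Y : M2) (c s : CC) : M2 := M2add (M2scale c M2id) (M2scale s Y).

Lemma Ysym_sq al be : al ^ 2 + be ^ 2 = 1 -> M2mul (Ysym al be) (Ysym al be) = M2id.
Proof.
  intro H. unfold M2mul, Ysym, M2id; simpl. f_equal; apply injective_projections;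
    unfold Cplus, Cmult, RtoC; cbn [fst snd]; nra.
Qed.

Lemma Yform_mul Y c s c' s' : M2mul Y Y = M2id ->
  M2mul (Yform Y c s) (Yform Y c' s') =
  Yform Y (Cplus (Cmult c c') (Cmult s s')) (Cplus (Cmult c s') (Cmult s c')).
Proof.
  intro HY.
  transitivity (M2add (M2add (M2scale (Cmult c c') M2id) (M2scale (Cplus (Cmult c s') (Cmult s c')) Y))
                      (M2scale (Cmult s s') (M2mul Y Y))).
  { destruct Y; unfold Yform, M2mul, M2add, M2scale, M2id; simpl; f_equal; ring. }
  rewrite HY. destruct Y; unfold Yform, M2mul, M2add, M2scale, M2id; simpl; f_equal; ring.
Qed.

Lemma Yform_sub Y c s c' s' :
  M2sub (Yform Y c s) (Yform Y c' s') = Yform Y (Cminus c c') (Cminus s s').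
Proof. destruct Y; unfold Yform, M2sub, M2add, M2scale, M2id; simpl; f_equal; unfold Cminus; ring. Qed.

Lemma Yform_subI Y c s : M2sub (Yform Y c s) M2id = Yform Y (Cminus c (RtoC 1)) s.
Proof. destruct Y; unfold Yform, M2sub, M2add, M2scale, M2id; simpl; f_equal; unfold Cminus; ring. Qed.

Lemma Yform_id Y : Yform Y (RtoC 1) (RtoC 0) = M2id.
Proof. destruct Y; unfold Yform, M2add, M2scale, M2id; simpl; f_equal; ring. Qed.

Lemma entry_le' c s x y : Cmod (Cplus (Cmult c (RtoC x)) (Cmult s (RtoC y))) <= Cmod c * Rabs x + Cmod s * Rabs y.
Proof. rewrite <- !Cmod_R. apply entry_le. Qed.

Lemma bnd_Yform al be k c s : 1 <= k -> Rabs al + Rabs be <= k ->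
  bnd (Yform (Ysym al be) c s) (k * (Cmod c + Cmod s)).
Proof.
  intros Hk Hab. unfold bnd, Yform, Ysym, M2add, M2scale, M2id; simpl.
  pose proof (entry_le' c s 1 al). pose proof (entry_le' c s 0 be).
  pose proof (entry_le' c s 1 (- al)).
  rewrite Rabs_R1, Rabs_R0, Rabs_Ropp in *.
  pose proof (Cmod_ge_0 c). pose proof (Cmod_ge_0 s).
  assert (Cmod s * (Rabs al + Rabs be) <= Cmod s * k) by (apply Rmult_le_compat_l; auto).
  repeat split; nra.
Qed.

Lemma add_subII T : M2add T (M2sub M2id M2id) = T.
Proof. destruct T; unfold M2sub, M2add, M2scale, M2id; simpl; f_equal; ring. Qed.

Lemma decomp P X Q P' X' Q' : M2mul P Q = M2id -> M2mul P' Q' = M2id ->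
  M2sub (M2mul (M2mul P X) Q) (M2mul (M2mul P' X') Q') =
  M2add (M2add (M2mul (M2mul (M2sub P P') (M2sub X M2id)) Q) (M2mul (M2mul P' (M2sub X X')) Q))
        (M2mul (M2mul P' (M2sub X' M2id)) (M2sub Q Q')).
Proof.
  intros H H'.
  transitivity (M2add (M2add (M2add (M2mul (M2mul (M2sub P P') (M2sub X M2id)) Q) (M2mul (M2mul P' (M2sub X X')) Q))
        (M2mul (M2mul P' (M2sub X' M2id)) (M2sub Q Q'))) (M2sub (M2mul P Q) (M2mul P' Q'))).
  { destruct P, X, Q, P', X', Q'; unfold M2sub, M2add, M2mul, M2scale, M2id; simpl; f_equal; ring. }
  rewrite H, H'. apply add_subII.
Qed.


Definition wpi : CC := (0, PI / 4).
Definition Qt : M2 := mkM2 (RtoC 0) (0, 1) (0, -1) (RtoC 0).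

Lemma Qt_sq : M2mul Qt Qt = M2id.
Proof.
  unfold M2mul, Qt, M2id; simpl. f_equal; apply injective_projections;
    unfold Cplus, Cmult, RtoC; cbn [fst snd]; ring.
Qed.

Lemma th1 : M2scale (RtoC (PI / 2)) thetam = M2scale wpi Qt.
Proof.
  unfold M2scale, thetam, wpi, Qt; simpl. f_equal; apply injective_projections;
    unfold Cplus, Cmult, RtoC; cbn [fst snd]; field.
Qed.
Lemma th2 : M2scale (RtoC (- (PI / 2))) thetam = M2scale (Copp wpi) Qt.
Proof.
  unfold M2scale, thetam, wpi, Qt, Copp; simpl. f_equal; apply injective_projections;
    unfold Cplus, Cmult, RtoC; cbn [fst snd]; field.
Qed.

Definition pp := PSeries (ar wpi) 1.
Definition qq := PSeries (ai wpi) 1.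

Lemma Ef_w : Ef wpi = (pp, qq).
Proof. reflexivity. Qed.

Lemma Ef_mw : Ef (Copp wpi) = (pp, - qq).
Proof.
  assert (Hc : Copp wpi = Cconj wpi).
  { unfold wpi, Copp, Cconj; apply injective_projections; simpl; ring. }
  unfold Ef, pp, qq. rewrite Hc. apply injective_projections; simpl.
  - apply PSeries_ext. intro n. unfold ar. rewrite <- Cpow_conj, re_conj. reflexivity.
  - rewrite <- PSeries_opp. apply PSeries_ext. intro n. unfold ai, PS_opp. rewrite <- Cpow_conj, im_conj.
    unfold opp; simpl. unfold Rdiv; ring.
Qed.

Lemma pq1 : pp ^ 2 + qq ^ 2 = 1.
Proof.
  pose proof (Ef_mul_opp wpi) as H. rewrite Ef_w, Ef_mw in H.
  apply (f_equal fst) in H. unfold Cmult, RtoC in H; simpl in H. nra.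
Qed.

Lemma Ch_w : Ch wpi = (pp, 0).
Proof. unfold Ch. rewrite Ef_w, Ef_mw. apply injective_projections; unfold Cmult, Cplus, RtoC; cbn [fst snd]; field. Qed.
Lemma Sh_w : Sh wpi = (0, qq).
Proof. unfold Sh. rewrite Ef_w, Ef_mw. apply injective_projections; unfold Cminus, Cmult, Cplus, Copp, RtoC; cbn [fst snd]; field. Qed.

Definition al := pp ^ 2 - qq ^ 2.
Definition be := 2 * pp * qq.

Lemma Ym_eq : Ym = M2scale (RtoC (/ 2)) (Ysym al be).
Proof.
  unfold Ym, oneparam. rewrite th1, th2, !M2exp_form by exact Qt_sq.
  rewrite Ch_opp, Sh_opp, Ch_w, Sh_w.
  unfold M2mul, M2add, M2scale, M2id, Qt, Xm, Ysym, al, be; simpl.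
  f_equal; apply injective_projections; unfold Cplus, Cmult, Copp, RtoC; cbn [fst snd]; field.
Qed.

Lemma albe1 : al ^ 2 + be ^ 2 = 1.
Proof. unfold al, be. pose proof pq1. transitivity ((pp ^ 2 + qq ^ 2) ^ 2). ring. rewrite H; ring. Qed.

Lemma albe_k : Rabs al + Rabs be <= sqrt 2.
Proof.
  pose proof albe1.
  rewrite <- (sqrt_pow2 (Rabs al + Rabs be)) by (pose proof (Rabs_pos al); pose proof (Rabs_pos be); lra).
  apply sqrt_le_1_alt.
  assert (Rabs al ^ 2 = al ^ 2) by (rewrite <- Rsqr_pow2, <- Rsqr_abs, Rsqr_pow2; reflexivity).
  assert (Rabs be ^ 2 = be ^ 2) by (rewrite <- Rsqr_pow2, <- Rsqr_abs, Rsqr_pow2; reflexivity).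
  assert (0 <= (Rabs al - Rabs be) ^ 2) by apply pow2_ge_0. nra.
Qed.

Lemma scale_scale a b P : M2scale a (M2scale b P) = M2scale (Cmult a b) P.
Proof. destruct P; unfold M2scale; simpl; f_equal; ring. Qed.

Lemma Yb_form b : oneparam Ym b = Yform (Ysym al be) (Ch (Cmult b (RtoC (/2)))) (Sh (Cmult b (RtoC (/2)))).
Proof.
  unfold oneparam. rewrite Ym_eq, scale_scale. apply M2exp_form. apply Ysym_sq, albe1.
Qed.

Lemma Xa_form a : oneparam Xm a = Yform (Ysym 1 0) (Ch (Cmult a (RtoC (/2)))) (Sh (Cmult a (RtoC (/2)))).
Proof.
  unfold oneparam.
  replace (M2scale a Xm) with (M2scale (Cmult a (RtoC (/2))) (Ysym 1 0)).
  apply M2exp_form. apply Ysym_sq. ring.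
  unfold M2scale, Xm, Ysym; simpl. f_equal; apply injective_projections; unfold Cmult, RtoC; cbn [fst snd]; field.
Qed.


Lemma prod3 x y w X Y W : 0 <= x -> x <= X -> 0 <= y -> y <= Y -> 0 <= w -> w <= W -> x * y * w <= X * Y * W.
Proof.
  intros. apply Rmult_le_compat; try lra. apply Rmult_le_pos; lra. apply Rmult_le_compat; lra.
Qed.

Lemma final_arith k A1 A2 A3 A4 A5 A7 A8 B Ea eps ca Eb EA :
  k * k = 2 -> 0 <= k -> 0 <= A1 -> 0 <= A2 -> 0 <= A3 -> 0 <= A4 -> 0 <= A5 -> 0 <= A7 -> 0 <= A8 ->
  0 <= eps -> 0 <= ca -> 0 <= Ea -> 0 <= B -> 0 <= Eb ->
  A1 <= eps / 2 * B -> A2 <= ca / 2 * Ea -> A3 <= B -> A4 <= B -> A5 <= eps * ca / 2 * Ea ->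
  A7 <= ca * Ea -> A8 <= eps / 2 * B -> B * B <= 3 * Eb -> Ea <= EA ->
  k * A1 * (1 * A2) * (k * A3) + k * A4 * (1 * A5) * (k * A3) + k * A4 * (1 * A7) * (k * A8)
  <= 12 * (EA * Eb) * ca * eps.
Proof.
  intros.
  assert (T1 : A1 * A2 * A3 <= (eps / 2 * B) * (ca / 2 * Ea) * B) by (apply prod3; lra).
  assert (T2 : A4 * A5 * A3 <= B * (eps * ca / 2 * Ea) * B) by (apply prod3; lra).
  assert (T3 : A4 * A7 * A8 <= B * (ca * Ea) * (eps / 2 * B)) by (apply prod3; lra).
  assert (E : k * A1 * (1 * A2) * (k * A3) + k * A4 * (1 * A5) * (k * A3) + k * A4 * (1 * A7) * (k * A8)
     = (k * k) * (A1 * A2 * A3 + A4 * A5 * A3 + A4 * A7 * A8)) by ring.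
  rewrite E, H.
  assert (S : A1 * A2 * A3 + A4 * A5 * A3 + A4 * A7 * A8 <= 5 / 4 * (eps * ca) * Ea * (B * B)).
  { assert (E2 : eps / 2 * B * (ca / 2 * Ea) * B + B * (eps * ca / 2 * Ea) * B + B * (ca * Ea) * (eps / 2 * B)
        = 5 / 4 * (eps * ca) * Ea * (B * B)) by field. lra. }
  assert (0 <= eps * ca) by (apply Rmult_le_pos; lra).
  assert (S2 : 5 / 4 * (eps * ca) * Ea * (B * B) <= 5 / 4 * (eps * ca) * EA * (3 * Eb)).
  { apply Rmult_le_compat; try nra. }
  nra.
Qed.

Lemma exp_mono x y : x <= y -> exp x <= exp y.
Proof. intro H. destruct (Rle_lt_or_eq_dec _ _ H). left; apply exp_increasing; auto. subst; lra. Qed.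

Lemma Cmod_half z : Cmod (Cmult z (RtoC (/ 2))) = Cmod z / 2.
Proof. rewrite Cmod_mult, Cmod_R, Rabs_right by lra. unfold Rdiv; ring. Qed.

Lemma pairs_nonneg c s : 0 <= Cmod c + Cmod s.
Proof. pose proof (Cmod_ge_0 c); pose proof (Cmod_ge_0 s); lra. Qed.

Theorem lemmaA7 (A eps : R) (a b a' b' : CC) :
  0 < A ->
  2 * Cmod a * exp (Cmod b + 1) <= A ->
  Cmod (Cminus b b') < eps ->
  Cmod (Cminus a a') < eps * Cmod a ->
  eps < Rmin (/ exp 1) (/ A) ->
  opnorm (M2sub
            (M2mul (M2mul (oneparam Ym b) (oneparam Xm a)) (oneparam Ym (Copp b)))
            (M2mul (M2mul (oneparam Ym b') (oneparam Xm a')) (oneparam Ym (Copp b'))))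
  <= 12 * exp (A + Cmod b) * Cmod a * eps.
Proof.
  intros HA Hab Hb Ha He.
  assert (He1 : eps < 1).
  { assert (exp 1 >= 2) by (pose proof (exp_ineq1_le 1); lra).
    assert (/ exp 1 <= / 2) by (apply Rinv_le_contravar; lra).
    pose proof (Rmin_l (/ exp 1) (/ A)). lra. }
  assert (He0 : 0 <= eps) by (pose proof (Cmod_ge_0 (Cminus b b')); lra).
  assert (Hca : 0 <= Cmod a) by apply Cmod_ge_0.
  assert (HaA : Cmod a <= A).
  { assert (1 <= exp (Cmod b + 1)).
    { pose proof (exp_ineq1_le (Cmod b + 1)). pose proof (Cmod_ge_0 b); lra. }
    assert (2 * Cmod a * 1 <= 2 * Cmod a * exp (Cmod b + 1)) by (apply Rmult_le_compat_l; lra).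
    lra. }
  rewrite !Yb_form, !Xa_form.
  set (Y2 := Ysym al be). set (K := Ysym 1 0).
  set (z := Cmult b (RtoC (/ 2))). set (z' := Cmult b' (RtoC (/ 2))).
  set (za := Cmult a (RtoC (/ 2))). set (za' := Cmult a' (RtoC (/ 2))).
  replace (Cmult (Copp b) (RtoC (/ 2))) with (Copp z) by (unfold z; ring).
  replace (Cmult (Copp b') (RtoC (/ 2))) with (Copp z') by (unfold z'; ring).
  assert (HY2 : M2mul Y2 Y2 = M2id) by (apply Ysym_sq, albe1).
  assert (PQ : forall w, M2mul (Yform Y2 (Ch w) (Sh w)) (Yform Y2 (Ch (Copp w)) (Sh (Copp w))) = M2id).
  { intro w. rewrite Yform_mul by exact HY2. rewrite Ch_opp, Sh_opp.
    replace (Cplus (Cmult (Ch w) (Ch w)) (Cmult (Sh w) (Copp (Sh w)))) with (RtoC 1).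
    replace (Cplus (Cmult (Ch w) (Copp (Sh w))) (Cmult (Sh w) (Ch w))) with (RtoC 0) by ring.
    apply Yform_id. rewrite <- (ChSh w). unfold Cminus; ring. }
  rewrite decomp by apply PQ.
  rewrite !Yform_sub, !Yform_subI.
  assert (Hk : 1 <= sqrt 2) by (rewrite <- sqrt_1; apply sqrt_le_1_alt; lra).
  assert (HK : Rabs 1 + Rabs 0 <= 1) by (rewrite Rabs_R1, Rabs_R0; lra).
  eapply Rle_trans.
  { apply bnd_opnorm. apply bnd_add; [apply bnd_add|]; (apply bnd_mul; [apply bnd_mul|]);
      first [ apply (bnd_Yform al be (sqrt 2)); [exact Hk| exact albe_k]
            | apply (bnd_Yform 1 0 1); [lra| exact HK] ]. }
  assert (Hz : Cmod z = Cmod b / 2) by apply Cmod_half.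
  assert (Hzz : Cmod (Cminus z z') = Cmod (Cminus b b') / 2).
  { rewrite <- Cmod_half. f_equal. unfold z, z'; ring. }
  assert (Hzz2 : Cmod (Cminus (Copp z) (Copp z')) = Cmod (Cminus b b') / 2).
  { rewrite <- Hzz, <- Cmod_opp. f_equal. ring. }
  assert (Hza : Cmod za = Cmod a / 2) by apply Cmod_half.
  assert (Hzaa : Cmod (Cminus za za') = Cmod (Cminus a a') / 2).
  { rewrite <- Cmod_half. f_equal. unfold za, za'; ring. }
  set (r := Cmod b / 2 + 1 / 2).
  assert (Hzr : Cmod z <= r) by (unfold r; lra).
  assert (Hz'r : Cmod z' <= r).
  { replace z' with (Cminus z (Cminus z z')) by ring.
    pose proof (Cmod_triangle z (Copp (Cminus z z'))). rewrite Cmod_opp in H. unfold Cminus at 1. unfold r; lra. }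
  assert (Hmzr : Cmod (Copp z) <= r) by (rewrite Cmod_opp; auto).
  assert (Hmz'r : Cmod (Copp z') <= r) by (rewrite Cmod_opp; auto).
  assert (Hzaa1 : Cmod za <= Cmod a) by lra.
  assert (Hzaa2 : Cmod za' <= Cmod a).
  { replace za' with (Cminus za (Cminus za za')) by ring.
    pose proof (Cmod_triangle za (Copp (Cminus za za'))). rewrite Cmod_opp in H. unfold Cminus at 1.
    assert (eps * Cmod a <= Cmod a) by nra. lra. }
  set (B := exp r). set (Ea := exp (Cmod a)).
  assert (HB : 0 <= B) by (left; apply exp_pos). assert (HEa : 0 <= Ea) by (left; apply exp_pos).
  assert (A1 : Cmod (Cminus (Ch z) (Ch z')) + Cmod (Cminus (Sh z) (Sh z')) <= eps / 2 * B).
  { eapply Rle_trans. apply pair_lip; eauto. rewrite Hzz. apply Rmult_le_compat_r; lra. }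
  assert (A8 : Cmod (Cminus (Ch (Copp z)) (Ch (Copp z'))) + Cmod (Cminus (Sh (Copp z)) (Sh (Copp z'))) <= eps / 2 * B).
  { eapply Rle_trans. apply pair_lip; eauto. rewrite Hzz2. apply Rmult_le_compat_r; lra. }
  assert (A3 : Cmod (Ch (Copp z)) + Cmod (Sh (Copp z)) <= B).
  { eapply Rle_trans. apply pair_bound. apply exp_mono. auto. }
  assert (A4 : Cmod (Ch z') + Cmod (Sh z') <= B).
  { eapply Rle_trans. apply pair_bound. apply exp_mono. auto. }
  assert (A5 : Cmod (Cminus (Ch za) (Ch za')) + Cmod (Cminus (Sh za) (Sh za')) <= eps * Cmod a / 2 * Ea).
  { eapply Rle_trans. apply pair_lip; eauto. rewrite Hzaa. apply Rmult_le_compat_r; lra. }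
  assert (Aw : forall w, Cmod w <= Cmod a -> Cmod (Cminus (Ch w) (RtoC 1)) + Cmod (Sh w) <= Cmod w * Ea).
  { intros w Hw. rewrite <- Ch0. replace (Sh w) with (Cminus (Sh w) (Sh (RtoC 0))) at 1 by (rewrite Sh0; ring).
    replace (Cmod w) with (Cmod (Cminus w (RtoC 0))) at 1 by (f_equal; ring).
    apply pair_lip; auto. rewrite Cmod_0. apply Cmod_ge_0. }
  assert (A2 : Cmod (Cminus (Ch za) (RtoC 1)) + Cmod (Sh za) <= Cmod a / 2 * Ea).
  { rewrite <- Hza. apply Aw; auto. }
  assert (A7 : Cmod (Cminus (Ch za') (RtoC 1)) + Cmod (Sh za') <= Cmod a * Ea).
  { eapply Rle_trans. apply Aw; auto. apply Rmult_le_compat_r; auto. }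
  assert (HBB : B * B <= 3 * exp (Cmod b)).
  { unfold B. rewrite <- exp_plus. replace (r + r) with (Cmod b + 1) by (unfold r; field).
    rewrite exp_plus. pose proof exp_le_3. pose proof (exp_pos (Cmod b)). nra. }
  assert (HEA : Ea <= exp A) by (apply exp_mono; auto).
  rewrite exp_plus.
  apply final_arith with (B := B) (Ea := Ea); auto; try apply pairs_nonneg.
  apply sqrt_sqrt; lra. apply sqrt_pos. left; apply exp_pos.
Qed.
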